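(* Let $A$ be a commutative unital ring of characteristic $0$, $n\ge4$, $k\in\{3,\ldots,n-1\}$ and $(b_1,\ldots,b_k)\in A^k$. Let $s=(1_A,n_A-2_A,1_A,2_A,\ldots,2_A)\in A^n$ (last $n-3$ entries equal to $2_A$). Suppose $(b_1,\ldots,b_k)$ can be used to reduce $s$, i.e. $(b_1,\ldots,b_k)$ is a $\lambda$-quiddity over $A$ and there exists $(c_1,\ldots,c_{n+2-k})\in A^{n+2-k}$ with $s\sim(c_1,\ldots,c_{n+2-k})\oplus(b_1,\ldots,b_k)$. Then there exist $x,y\in A$ such that $(b_1,\ldots,b_k)=(x,1_A,2_A,\ldots,2_A,y)$ or $(b_1,\ldots,b_k)=(x,2_A,\ldots,2_A,1_A,y)$ (the number of entries equal to $2_A$ being $k-3$, possibly zero).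
   Context: $k_A=k\cdot1_A$ for an integer $k$. For $a_1,\ldots,a_n\in A$, $M_n(a_1,\ldots,a_n)=\begin{pmatrix}a_n&-1\\1&0\end{pmatrix}\cdots\begin{pmatrix}a_1&-1\\1&0\end{pmatrix}$. An $n$-tuple $(a_1,\ldots,a_n)\in A^n$ is a $\lambda$-quiddity over $A$ if $M_n(a_1,\ldots,a_n)=\pm\mathrm{Id}$. For $(a_1,\ldots,a_n)\in A^n$, $(b_1,\ldots,b_m)\in A^m$, define $(a_1,\ldots,a_n)\oplus(b_1,\ldots,b_m)=(a_1+b_m,a_2,\ldots,a_{n-1},a_n+b_1,b_2,\ldots,b_{m-1})$. Write $(a_1,\ldots,a_n)\sim(b_1,\ldots,b_n)$ if $(b_1,\ldots,b_n)$ is obtained from $(a_1,\ldots,a_n)$ or from $(a_n,\ldots,a_1)$ by a cyclic permutation. *)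

(* Defs.v *)
From HB Require Import structures.
From mathcomp Require Import all_boot all_order all_algebra.
Set Implicit Arguments. Unset Strict Implicit. Unset Printing Implicit Defensive.
Import GRing.Theory.
Local Open Scope ring_scope.

Definition char0 (A : comNzRingType) : Prop :=
  forall m : nat, (m%:R : A) = 0 -> m = 0%N.

Definition Mstep (A : comNzRingType) (a : A) : 'M[A]_2 :=
  \matrix_(i < 2, j < 2)
    (if (i : nat) == 0%N then (if (j : nat) == 0%N then a else -1)
     else (if (j : nat) == 0%N then 1 else 0)).

(* M_n(a_1,...,a_n) = M(a_n) ... M(a_1). *)
Definition Mn (A : comNzRingType) (s : seq A) : 'M[A]_2 :=
  foldl (fun M a => Mstep a *m M) 1%:M s.

Definition lambda_quiddity (A : comNzRingType) (s : seq A) : Prop :=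
  Mn s = 1%:M \/ Mn s = - 1%:M.

(* (a_1,...,a_n) (+) (b_1,...,b_m)
   = (a_1 + b_m, a_2, ..., a_{n-1}, a_n + b_1, b_2, ..., b_{m-1}). *)
Definition oplus (A : comNzRingType) (a b : seq A) : seq A :=
  (head 0 a + last 0 b) :: take (size a - 2) (behead a)
  ++ (last 0 a + head 0 b) :: take (size b - 2) (behead b).

Definition quid_equiv (A : comNzRingType) (a b : seq A) : Prop :=
  size a = size b /\ exists i : nat, b = rot i a \/ b = rot i (rev a).

(* Main.v *)
Require Import Defs.
From mathcomp Require Import all_boot all_order all_algebra.
From mathcomp Require Import ring zify.
Import GRing.Theory.
Local Open Scope ring_scope.

Section S.
Variable A : comNzRingType.

Definition gstep (p : A * A) (a : A) : A * A := (a * p.1 - p.2, p.1).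
Definition cont (l : seq A) := foldl gstep (1, 0) l.

Lemma foldl_Mn (X : 'M[A]_2) (l : seq A) :
  foldl (fun M a => Mstep a *m M) X l = Mn l *m X.
Proof.
elim/last_ind: l => [|l a IH]; first by rewrite /Mn /= mul1mx.
by rewrite /Mn !foldl_rcons -/(Mn l) IH mulmxA.
Qed.

Lemma Mn_col (l : seq A) : Mn l 0 0 = (cont l).1 /\ Mn l 1 0 = (cont l).2.
Proof.
elim/last_ind: l => [|l a [IH1 IH2]]; first by rewrite /Mn /cont /= !mxE.
rewrite /Mn /cont !foldl_rcons -/(Mn l) -/(cont l) /gstep /=.
rewrite !mxE !big_ord_recl big_ord0 /= !mxE /= IH1.
rewrite (_ : (lift ord0 ord0 : 'I_2) = 1) //; last by apply/val_inj.
rewrite IH2 !big_ord0; split; ring.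

Qed.

Lemma Mn_b (b1 bk : A) (W : seq A) :
  Mn (b1 :: rcons W bk) 1 1 = - Mn W 0 0.
Proof.
rewrite {1}/Mn /= foldl_rcons foldl_Mn mulmx1.
rewrite !mxE !big_ord_recl big_ord0 /= !mxE /=.
rewrite !big_ord_recl !big_ord0 /= !mxE /=.
ring.
Qed.


Lemma cont_nseq2 (u v : A) (q : nat) :
  foldl gstep (u, v) (nseq q 2) = (u + q%:R * (u - v), v + q%:R * (u - v)).
Proof.
elim: q u v => [|q IH] u v /=; first by rewrite !mul0r !addr0.
rewrite IH /gstep /=; congr (_, _); rewrite !mulrSr; ring.
Qed.

Lemma eqpm (x y : A) : x = y -> (x = 1 \/ x = -1) -> y = 1 \/ y = -1.
Proof. by move=> ->. Qed.

Lemma char0_pm (hA : char0 A) (m : nat) :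
  (2 <= m)%N -> (m%:R : A) = 1 \/ (m%:R : A) = -1 -> False.
Proof.
move=> hm [] h.
- have : ((m - 1)%:R : A) = 0 by rewrite natrB; [rewrite h subrr | lia].
  move/hA; lia.
- have : ((m + 1)%:R : A) = 0 by rewrite natrD h addNr.
  move/hA; lia.
Qed.

Lemma caseA (hA : char0 A) (N a q0 L : nat) (Z : seq A) :
  (1 <= L)%N -> (L + 1 <= N)%N -> (L <= a + 3 + q0)%N ->
  ((cont (take L (nseq a 2 ++ [:: 1, N%:R, 1 & nseq q0 2 ++ Z]))).1 = 1 \/
   (cont (take L (nseq a 2 ++ [:: 1, N%:R, 1 & nseq q0 2 ++ Z]))).1 = -1) ->
  take L (nseq a 2 ++ [:: 1, N%:R, 1 & nseq q0 2 ++ Z]) = rcons (nseq (L-1) 2) 1.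
Proof.
move=> h1 h2 h3.
have [haL|haL] := leqP L a.
  rewrite takel_cat ?size_nseq // take_nseq // => H; exfalso.
  apply: (char0_pm hA L.+1) => //.
  by move: H; rewrite /cont cont_nseq2 /= -addn1 natrD; apply: eqpm; ring.
have [r EL] : exists r, L = (a + r.+1)%N by exists (L - a).-1%N; lia.
subst L.
rewrite take_cat size_nseq ltnNge leq_addr /= addKn.
case: r h1 haL h2 h3 => [|[|q]] h1 haL h2 h3 /=.
- by rewrite cats1 addnK.
- move=> H; exfalso.
  have [m hm EN] : exists2 m, (2 <= m)%N & N = (m + a + 1)%N by exists (N - 1 - a)%N; lia.
  apply: (char0_pm hA m hm).
  move: H; rewrite /cont foldl_cat cont_nseq2 /= /gstep /= EN !natrD.
  by apply: eqpm; ring.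
- rewrite takel_cat ?size_nseq; last by lia.
  rewrite take_nseq; last by lia.
  move=> H; exfalso.
  have [m hm EN] : exists2 m, (2 <= m)%N & N = (m + a + q + 2)%N by exists (N - 2 - a - q)%N; lia.
  apply: (char0_pm hA m hm).
  move: H; rewrite /cont foldl_cat cont_nseq2 /= /gstep /= cont_nseq2 /= EN !natrD.
  by apply: eqpm; ring.
Qed.

Lemma caseB (hA : char0 A) (N q0 L : nat) (Z : seq A) :
  (1 <= L)%N -> (L + 1 <= N)%N -> (L <= q0 + 2)%N ->
  ((cont (take L [:: N%:R, 1 & nseq q0 2 ++ Z])).1 = 1 \/
   (cont (take L [:: N%:R, 1 & nseq q0 2 ++ Z])).1 = -1) -> False.
Proof.
move=> h1 h2 h3.
case: L h1 h2 h3 => [|[|q]] // h1 h2 h3 /=.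
- rewrite /cont /= /gstep /= mulr1 subr0.
  by apply: (char0_pm hA N); lia.
- rewrite takel_cat ?size_nseq; last by lia.
  rewrite take_nseq; last by lia.
  move=> H.
  have [m hm EN] : exists2 m, (2 <= m)%N & N = (m + q + 1)%N by exists (N - 1 - q)%N; lia.
  apply: (char0_pm hA m hm).
  move: H; rewrite /cont /= /gstep /= cont_nseq2 /= EN !natrD.
  by apply: eqpm; ring.
Qed.


Lemma rot_red (T : Type) (t : seq T) j : (0 < size t)%N ->
  exists2 j2, (j2 < size t)%N & rot j t = rot j2 t.
Proof.
move=> h; rewrite rot_minn.
case: (ltnP (minn j (size t)) (size t)) => h2; first by exists (minn j (size t)).
exists 0%N => //; have -> : minn j (size t) = size t by apply/eqP; rewrite eqn_leq geq_minr h2.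
by rewrite rot_size rot0.
Qed.

Lemma window (T : Type) (t : seq T) j L : (0 < size t)%N -> (L <= size t)%N ->
  exists2 p, (p < size t)%N & drop (size t - L) (rot j t) = take L (drop p (t ++ t)).
Proof.
move=> h0 hL; have [j2 hj2 ->] := @rot_red _ t j h0.
set n := size t.
have E1 : rot j2 t = take n (drop j2 (t ++ t)).
  rewrite drop_cat hj2 take_cat size_drop ltnNge leq_subr /= /rot.
  by congr (_ ++ take _ _); rewrite /n; lia.
rewrite E1.
have E2 : drop (n - L) (take n (drop j2 (t ++ t))) = take L (drop (n - L + j2) (t ++ t)).
  by rewrite -drop_drop [RHS]take_drop subnKC.
rewrite E2.
case: (ltnP (n - L + j2) n) => h3; first by exists (n - L + j2)%N.
exists (n - L + j2 - n)%N; first by lia.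
rewrite drop_cat ltnNge h3 /= drop_cat.
have -> : (n - L + j2 - n < size t)%N by rewrite /n; lia.
by rewrite takel_cat // size_drop; rewrite /n; lia.
Qed.

End S.
Arguments Mn_col {A}.
Arguments Mn_b {A}.
Arguments caseA {A}.
Arguments caseB {A}.
Arguments cont {A}.
Arguments window {T}.

Theorem lemma4p8 (A : comNzRingType) (hA : char0 A) (n k : nat)
  (hn : (4 <= n)%N) (hk1 : (3 <= k)%N) (hk2 : (k <= n - 1)%N)
  (b : seq A) (hb : size b = k) :
  let s : seq A := 1 :: (n%:R - 2) :: 1 :: nseq (n - 3) 2 in
  lambda_quiddity b ->
  (exists c : seq A, size c = (n + 2 - k)%N /\ quid_equiv s (oplus c b)) ->
  exists x y : A,
    b = x :: 1 :: rcons (nseq (k - 3) 2) y \/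
    b = x :: nseq (k - 3) 2 ++ [:: 1; y].
Proof.
move=> s hq [c [hc [hsz [i hi]]]].
have EN : (n%:R - 2 : A) = ((n - 2)%N)%:R by rewrite natrB //; lia.
set N := (n - 2)%N.
have Es : s = [:: 1, N%:R, 1 & nseq (n - 3) 2] by rewrite /s EN.
have hs : size s = n by rewrite Es /= size_nseq; lia.
clear hsz.
case: b hb hq hi => [|b1 bb] hb hq hi; first by move: hb => /=; lia.
case/lastP: bb hb hq hi => [|W bk] hb hq hi; first by move: hb => /=; lia.
have hW : size W = (k - 2)%N by move: hb; rewrite /= size_rcons; lia.
have HW : (cont W).1 = 1 \/ (cont W).1 = -1.
  case: (Mn_col W) => <- _.
  case: hq => hq; move: (congr1 (fun M : 'M[A]_2 => M 1 1) hq); rewrite Mn_b !mxE /= => h.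
  - by right; apply: oppr_inj; rewrite h opprK.
  - by left; apply: oppr_inj.
have Hd : W = drop (n + 2 - k) (oplus c (b1 :: rcons W bk)).
  rewrite /oplus /= -hc.
  case: c hc {hi} => [|c1 c'] hc; first by move: hc => /=; lia.
  rewrite /= -cats1.
  have -> : ((size (W ++ [:: bk])).+1 - 2)%N = size W by rewrite size_cat /=; lia.
  rewrite takel_cat // take_size.
  have -> : ((size c').+1 - 2)%N = (size c' - 1)%N by lia.
  rewrite drop_cat size_takel; last by move: hc => /=; lia.
  have -> : (size c' < size c' - 1)%N = false by lia.
  have -> : (size c' - (size c' - 1))%N = 1%N by move: hc => /=; lia.
  by rewrite /= drop0.
have [j Hj] : exists j, oplus c (b1 :: rcons W bk) = rot j s.
  case: hi => ->; first by exists i.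
  have -> : rev s = rot 3 s by rewrite Es /rot /= !rev_cons rev_nseq -!cats1 -!catA drop0 take0.
  rewrite rot_minn size_rot rot_add_mod ?hs; [eexists; reflexivity | lia | exact: geq_minr].
have hs0 : (0 < size s)%N by rewrite hs; lia.
have hsL : (k - 2 <= size s)%N by rewrite hs; lia.
have [p hp HWp] := window s j (k - 2) hs0 hsL.
have HW2 : W = take (k - 2) (drop p (s ++ s)).
  by rewrite -HWp -Hj {1}Hd hs; congr drop; lia.
rewrite hs in hp; rewrite Es in HW2.
have fin1 : W = rcons (nseq (k - 2 - 1) 2) 1 -> exists x y : A,
    b1 :: rcons W bk = [:: x, 1 & rcons (nseq (k - 3) 2) y] \/
    b1 :: rcons W bk = x :: nseq (k - 3) 2 ++ [:: 1; y].
  move=> ->; exists b1, bk; right.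
  have -> : (k - 2 - 1 = k - 3)%N by lia.
  by rewrite -!cats1 -catA.
have fin2 : W = 1 :: nseq (k - 3) 2 -> exists x y : A,
    b1 :: rcons W bk = [:: x, 1 & rcons (nseq (k - 3) 2) y] \/
    b1 :: rcons W bk = x :: nseq (k - 3) 2 ++ [:: 1; y].
  by move=> ->; exists b1, bk; left.
have h1 : (1 <= k - 2)%N by lia.
have h2 : (k - 2 + 1 <= N)%N by rewrite /N; lia.
clear HWp; case: p hp HW2 => [|[|[|t]]] hp HW2.
- apply: fin1; rewrite HW2.
  apply: (caseA hA N 0 (n - 3) (k - 2) [:: 1, N%:R, 1 & nseq (n - 3) 2]) => //; first by lia.
  by rewrite -HW2.
- exfalso; rewrite drop1 /= in HW2.
  apply: (caseB hA N (n - 3) (k - 2) [:: 1, N%:R, 1 & nseq (n - 3) 2]) => //; first by lia.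
  by rewrite -HW2.
- apply: fin2; rewrite HW2 /=.
  have -> : (k - 2 = (k - 3).+1)%N by lia.
  by rewrite /= takel_cat ?size_nseq ?take_nseq //; lia.
- have ht : (t < n - 3)%N by lia.
  rewrite /= drop_cat size_nseq ht drop_nseq -[X in _ :: _ :: _ :: X]cats0 in HW2.
  apply: fin1; rewrite HW2.
  apply: (caseA hA N (n - 3 - t) (n - 3) (k - 2) [::]) => //; first by lia.
  by rewrite -HW2.
Qed.
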